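(* Let $f\in\mathbb R[x_1,\dots,x_n]$ be a polynomial satisfying conditions (C1), (C2) and (C3), and let $\lambda_f$ be a map of minimal barycentric coordinates of $f$. Suppose that for every $\alpha\in V(f)$ the inequality \[ f_{\alpha}\;>\;\sum_{\alpha^\star\in D(f)\cap (2\mathbb N_0^n)^c}|f_{\alpha^\star}|\,\lambda_f(\alpha^\star,\alpha)\;-\;\sum_{\alpha^\star\in D(f)\cap 2\mathbb N_0^n}\min\{0,f_{\alpha^\star}\}\,\lambda_f(\alpha^\star,\alpha) \] holds. Then $f$ is coercive on $\mathbb R^n$, i.e. $f(x)\to+\infty$ whenever $\|x\|\to+\infty$.
   Context: Notation: $\mathbb N_0=\mathbb N\cup\{0\}$, $[n]=\{1,\dots,n\}$, $e_i$ the standard unit vectors, $(2\mathbb N_0^n)^c=\mathbb N_0^n\setminus 2\mathbb N_0^n$. Write $f(x)=\sum_{\alpha\in A(f)}f_\alpha x^\alpha$ with $A(f)\subseteq\mathbb N_0^n$ finite and $f_\alpha\neq0$ for $\alpha\in A(f)$. The Newton polytope at infinity is $\mathrm{New}_\infty(f)=\mathrm{conv}(A(f)\cup\{0\})$; $V_0(f)$ is its vertex set (it contains $0$), $V(f)=V_0(f)\setminus\{0\}$ (vertices at infinity), $V_0^c(f)=A(f)\setminus V_0(f)$, $V^c(f)=A(f)\setminus V(f)$. Conditions: (C1) $V(f)\subset 2\mathbb N_0^n$; (C2) $f_\alpha>0$ for all $\alpha\in V(f)$; (C3) for every $i\in[n]$, $V(f)$ contains a vector $2k_ie_i$ with $k_i\in\mathbb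 N$. Let $\mathcal G(f)$ be the set of nonempty faces $G$ of $\mathrm{New}_\infty(f)$ with $0\notin G$. An exponent $\alpha\in A(f)$ is gem degenerate if $\alpha\in V^c(f)\cap G$ for some $G\in\mathcal G(f)$; $D(f)$ denotes the set of gem degenerate exponents. A map of minimal barycentric coordinates of $f$ is a map $\lambda_f:V_0^c(f)\times V_0(f)\to[0,1]$ such that for each $\alpha^\star\in V_0^c(f)$ there is an affinely independent set $W_{\alpha^\star}\subseteq V_0(f)$ with $\lambda_f(\alpha^\star,\alpha)>0$ for $\alpha\in W_{\alpha^\star}$, $\lambda_f(\alpha^\star,\alpha)=0$ for $\alpha\in V_0(f)\setminus W_{\alpha^\star}$, and $\sum_{\alpha\in W_{\alpha^\star}}\lambda_f(\alpha^\star,\alpha)(\alpha,1)=(\alpha^\star,1)$. (Note $D(f)\subseteq V_0^c(f)$ under (C3).) *)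

(* Defs.v *)
(* real polynomials in n variables, represented by their
   support A(f) (a duplicate-free list of exponent vectors, each a list of
   n naturals) and a coefficient function. *)
From Stdlib Require Import Reals List Arith ClassicalEpsilon.
Import ListNotations.
Open Scope R_scope.

Definition expo := list nat.

Definition lsum {T : Type} (l : list T) (g : T -> R) : R :=
  fold_right (fun a s => g a + s) 0 l.

Definition lsum_if {T : Type} (P : T -> Prop) (l : list T) (g : T -> R) : R :=
  lsum l (fun a => if excluded_middle_informative (P a) then g a else 0).

Definition coordR (a : expo) (i : nat) : R := INR (nth i a 0%nat).

Definition zero_expo (n : nat) : expo := repeat 0%nat n.

Definition scaled_unit (n i m : nat) : expo :=
  map (fun j => if Nat.eqb j i then m else 0%nat) (seq 0 n).

Definition even_expo (a : expo) : Prop := forall i, Nat.Even (nth i a 0%nat).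

Definition monomial (n : nat) (a : expo) (x : nat -> R) : R :=
  fold_right Rmult 1 (map (fun i => x i ^ nth i a 0%nat) (seq 0 n)).
Definition peval (n : nat) (A : list expo) (c : expo -> R) (x : nat -> R) : R :=
  lsum A (fun a => c a * monomial n a x).

Definition norm2 (n : nat) (x : nat -> R) : R :=
  sqrt (lsum (seq 0 n) (fun i => x i ^ 2)).

Definition is_vertex (n : nat) (S : list expo) (v : expo) : Prop :=
  In v S /\
  ~ (exists wl : list (R * expo),
        (forall p, In p wl -> 0 <= fst p /\ In (snd p) S /\ snd p <> v) /\
        lsum wl fst = 1 /\
        (forall i, (i < n)%nat -> lsum wl (fun p => fst p * coordR (snd p) i) = coordR v i)).

(* V_0(f): vertices of New_inf(f) = conv(A(f) ∪ {0}) *)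
Definition in_V0 (n : nat) (A : list expo) (v : expo) : Prop :=
  is_vertex n (zero_expo n :: A) v.

Definition in_V (n : nat) (A : list expo) (v : expo) : Prop :=
  in_V0 n A v /\ v <> zero_expo n.

Definition in_V0c (n : nat) (A : list expo) (a : expo) : Prop :=
  In a A /\ ~ in_V0 n A a.

Definition dotR (n : nat) (w : nat -> R) (a : expo) : R :=
  lsum (seq 0 n) (fun i => w i * coordR a i).

(* a lies in a nonempty face G of New_inf(f) with 0 ∉ G: every face of a
   polytope is the set of maximizers of a linear functional w, and 0 ∉ G
   means the maximum value is > w.0 = 0. *)
Definition in_face_avoiding_0 (n : nat) (A : list expo) (a : expo) : Prop :=
  exists w : nat -> R,
    (forall b, In b A -> dotR n w b <= dotR n w a) /\ 0 < dotR n w a.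

Definition gem_degenerate (n : nat) (A : list expo) (a : expo) : Prop :=
  In a A /\ ~ in_V n A a /\ in_face_avoiding_0 n A a.

(* affine independence of a finite (duplicate-free) set W: the vectors
   (w,1), w in W, are linearly independent *)
Definition aff_indep (n : nat) (W : list expo) : Prop :=
  forall mu : expo -> R,
    (forall i, (i < n)%nat -> lsum W (fun w => mu w * coordR w i) = 0) ->
    lsum W mu = 0 ->
    forall w, In w W -> mu w = 0.

(* lam is a map of minimal barycentric coordinates of f
   (lam : V_0^c(f) x V_0(f) -> [0,1]; values elsewhere are irrelevant) *)
Definition min_bary_coords (n : nat) (A : list expo) (lam : expo -> expo -> R) : Prop :=
  forall a, in_V0c n A a ->
    (forall v, in_V0 n A v -> 0 <= lam a v <= 1) /\
    exists W : list expo,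
      NoDup W /\ (forall w, In w W -> in_V0 n A w) /\ aff_indep n W /\
      (forall w, In w W -> 0 < lam a w) /\
      (forall v, in_V0 n A v -> ~ In v W -> lam a v = 0) /\
      (forall i, (i < n)%nat -> lsum W (fun w => lam a w * coordR w i) = coordR a i) /\
      lsum W (fun w => lam a w) = 1.

Definition poly_support (n : nat) (A : list expo) (c : expo -> R) : Prop :=
  NoDup A /\ (forall a, In a A -> length a = n) /\ (forall a, In a A -> c a <> 0).

Definition cond_C1 (n : nat) (A : list expo) : Prop :=
  forall a, in_V n A a -> even_expo a.
Definition cond_C2 (n : nat) (A : list expo) (c : expo -> R) : Prop :=
  forall a, in_V n A a -> 0 < c a.
Definition cond_C3 (n : nat) (A : list expo) : Prop :=
  forall i, (i < n)%nat -> exists k, (1 <= k)%nat /\ in_V n A (scaled_unit n i (2 * k)).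

Definition coercive (n : nat) (A : list expo) (c : expo -> R) : Prop :=
  forall M : R, exists r : R, forall x : nat -> R, r < norm2 n x -> M < peval n A c x.

(* Main.v *)
Require Import Defs.
From Stdlib Require Import Reals List Lra Lia Permutation ClassicalEpsilon Classical.
Import ListNotations.
Open Scope R_scope.

Lemma lsum_nil {T} (g : T -> R) : lsum [] g = 0.
Proof. reflexivity. Qed.
Lemma lsum_cons {T} (a : T) l g : lsum (a :: l) g = g a + lsum l g.
Proof. reflexivity. Qed.
Lemma lsum_app {T} (l1 l2 : list T) g : lsum (l1 ++ l2) g = lsum l1 g + lsum l2 g.
Proof. induction l1; simpl; [lra|]. unfold lsum in *; simpl. rewrite IHl1; lra. Qed.
Lemma lsum_plus {T} (l : list T) f g : lsum l (fun a => f a + g a) = lsum l f + lsum l g.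
Proof. induction l; simpl; [lra|]. unfold lsum in *; simpl. rewrite IHl; lra. Qed.
Lemma lsum_minus {T} (l : list T) f g : lsum l (fun a => f a - g a) = lsum l f - lsum l g.
Proof. induction l; simpl; [lra|]. unfold lsum in *; simpl. rewrite IHl; lra. Qed.
Lemma lsum_scal {T} (l : list T) k f : lsum l (fun a => k * f a) = k * lsum l f.
Proof. induction l; simpl; [lra|]. unfold lsum in *; simpl. rewrite IHl; lra. Qed.
Lemma lsum_scalr {T} (l : list T) k f : lsum l (fun a => f a * k) = lsum l f * k.
Proof. induction l; simpl; [lra|]. unfold lsum in *; simpl. rewrite IHl; lra. Qed.
Lemma lsum_ext {T} (l : list T) f g : (forall a, In a l -> f a = g a) -> lsum l f = lsum l g.
Proof. induction l; intros H; simpl; [lra|]. unfold lsum in *; simpl.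
  rewrite H by (left; auto). rewrite IHl; auto. intros; apply H; right; auto. Qed.
Lemma lsum_le {T} (l : list T) f g : (forall a, In a l -> f a <= g a) -> lsum l f <= lsum l g.
Proof. induction l; intros H; simpl; [lra|]. unfold lsum in *; simpl.
  assert (f a <= g a) by (apply H; left; auto).
  assert (fold_right (fun a s => f a + s) 0 l <= fold_right (fun a s => g a + s) 0 l)
   by (apply IHl; intros; apply H; right; auto). lra. Qed.
Lemma lsum_nonneg {T} (l : list T) f : (forall a, In a l -> 0 <= f a) -> 0 <= lsum l f.
Proof. intros H. replace 0 with (lsum l (fun _ => 0)).
  apply lsum_le; auto. induction l; simpl; auto. unfold lsum in *; simpl. rewrite IHl. lra.
  intros; apply H; right; auto. Qed.
Lemma lsum_zero {T} (l : list T) : lsum l (fun _ => 0) = 0.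
Proof. induction l; simpl; auto. unfold lsum in *; simpl. rewrite IHl. lra. Qed.
Lemma lsum_exchange {T U} (l1 : list T) (l2 : list U) F :
  lsum l1 (fun a => lsum l2 (fun b => F a b)) = lsum l2 (fun b => lsum l1 (fun a => F a b)).
Proof. induction l1. rewrite lsum_nil. rewrite lsum_zero; auto.
  rewrite lsum_cons, IHl1. rewrite <- lsum_plus. apply lsum_ext. intros; rewrite lsum_cons; auto. Qed.
Lemma lsum_perm {T} (l1 l2 : list T) g : Permutation l1 l2 -> lsum l1 g = lsum l2 g.
Proof. induction 1; rewrite ?lsum_cons; try lra. Qed.
Lemma lsum_elem_le {T} (l : list T) g a : In a l -> (forall b, In b l -> 0 <= g b) -> g a <= lsum l g.
Proof. induction l; intros Ha H; simpl in Ha; [contradiction|]. rewrite lsum_cons.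
  destruct Ha as [->|Ha].
  - assert (0 <= lsum l g) by (apply lsum_nonneg; intros; apply H; right; auto). lra.
  - assert (g a <= lsum l g) by (apply IHl; auto; intros; apply H; right; auto).
    assert (0 <= g a0) by (apply H; left; auto). lra. Qed.
Lemma lsum_incl_le {T} (l1 l2 : list T) g : NoDup l1 -> incl l1 l2 ->
  (forall b, In b l2 -> 0 <= g b) -> lsum l1 g <= lsum l2 g.
Proof. revert l2. induction l1 as [|a l1 IH]; intros l2 Hn Hi Hg.
  - rewrite lsum_nil. apply lsum_nonneg; auto.
  - inversion Hn; subst.
    assert (Ha : In a l2) by (apply Hi; left; auto).
    destruct (in_split _ _ Ha) as [u [v ->]].
    rewrite (lsum_perm (u ++ a :: v) (a :: u ++ v)) by (symmetry; apply Permutation_middle).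
    rewrite !lsum_cons. apply Rplus_le_compat_l. apply IH; auto.
    + intros y Hy. assert (In y (u ++ a :: v)) by (apply Hi; right; auto).
      apply in_app_or in H. apply in_or_app. destruct H as [H|[H|H]]; auto. subst; contradiction.
    + intros y Hy. apply Hg. apply in_app_or in Hy; apply in_or_app. destruct Hy; auto. right; right; auto. Qed.
Lemma lsum_filter {T} (p : T -> bool) l g : lsum (filter p l) g = lsum l (fun a => if p a then g a else 0).
Proof. induction l; simpl; auto. destruct (p a); rewrite ?lsum_cons, IHl; try lra. Qed.
Lemma lsum_if_eq {T} (P : T -> Prop) l g : lsum_if P l g = lsum l (fun a => if excluded_middle_informative (P a) then g a else 0).
Proof. reflexivity. Qed.

Definition cstr := ((nat -> R) * R)%type.
Definition evalc (m : nat) (a : nat -> R) (u : nat -> R) := lsum (seq 0 m) (fun i => a i * u i).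
Definition feasible m (L : list cstr) := exists u, forall k, In k L -> evalc m (fst k) u <= snd k.

Inductive Der (L : list cstr) : (nat -> R) -> R -> Prop :=
| D_in : forall a c, In (a, c) L -> Der L a c
| D_add : forall a1 c1 a2 c2, Der L a1 c1 -> Der L a2 c2 -> Der L (fun i => a1 i + a2 i) (c1 + c2)
| D_scal : forall k a c, 0 <= k -> Der L a c -> Der L (fun i => k * a i) (k * c)
| D_triv : forall c, 0 <= c -> Der L (fun _ => 0) c.

Lemma evalc_lin m a b al be u :
  evalc m (fun i => al * a i + be * b i) u = al * evalc m a u + be * evalc m b u.
Proof. unfold evalc. rewrite <- !lsum_scal, <- lsum_plus. apply lsum_ext; intros; ring. Qed.

Lemma evalc_S m a u : evalc (S m) a u = evalc m a u + a m * u m.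
Proof. unfold evalc. rewrite seq_S, lsum_app, lsum_cons, lsum_nil. simpl. ring. Qed.

Lemma evalc_ext m a u v : (forall i, (i < m)%nat -> u i = v i) -> evalc m a u = evalc m a v.
Proof. intros H; unfold evalc; apply lsum_ext; intros i Hi. apply in_seq in Hi. rewrite H; auto; lia. Qed.

Lemma evalc_0 a u : evalc 0 a u = 0.
Proof. reflexivity. Qed.

Lemma Der_lift L L' a c : Der L' a c -> (forall k, In k L' -> Der L (fst k) (snd k)) -> Der L a c.
Proof. induction 1; intros H'.
  - apply (H' (a, c)); auto.
  - apply D_add; auto.
  - apply D_scal; auto.
  - apply D_triv; auto. Qed.

Lemma Der_zero L m a c : Der L a c -> (forall k, In k L -> fst k m = 0) -> a m = 0.
Proof. induction 1; intros H'.
  - apply (H' (a, c)); auto.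
  - rewrite IHDer1, IHDer2; auto; ring.
  - rewrite IHDer; auto; ring.
  - auto. Qed.

Lemma max_list (l : list R) : l <> [] -> exists t, In t l /\ forall x, In x l -> x <= t.
Proof. induction l as [|a l IH]; intros H; [congruence|].
  destruct l as [|b l'].
  - exists a; split; [left; auto|]. intros x [->|[]]; lra.
  - destruct IH as [t [Ht Hm]]; [congruence|].
    exists (Rmax a t). split.
    + unfold Rmax; destruct (Rle_dec a t); [right; auto|left; auto].
    + intros x [->|Hx]; [apply Rmax_l|]. apply Rle_trans with t; [auto|apply Rmax_r]. Qed.

Lemma min_list (l : list R) : l <> [] -> exists t, In t l /\ forall x, In x l -> t <= x.
Proof. intros H. destruct (max_list (map Ropp l)) as [t [Ht Hm]].
  destruct l; simpl; congruence.
  exists (- t). apply in_map_iff in Ht. destruct Ht as [y [<- Hy]]. split. rewrite Ropp_involutive; auto.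
  intros x Hx. assert (- x <= - y) by (apply Hm; apply in_map; auto). lra. Qed.

Lemma between (ls us : list R) : (forall l v, In l ls -> In v us -> l <= v) ->
  exists t, (forall l, In l ls -> l <= t) /\ (forall v, In v us -> t <= v).
Proof. intros H. destruct ls as [|l0 ls'].
  - destruct us as [|v0 us'].
    + exists 0; split; intros; contradiction.
    + destruct (min_list (v0 :: us')) as [t [_ Ht]]; [congruence|].
      exists t; split; [intros; contradiction|auto].
  - destruct (max_list (l0 :: ls')) as [t [Hti Ht]]; [congruence|].
    exists t; split; auto. Qed.

Definition Zs m (L : list cstr) := filter (fun k => if Req_EM_T (fst k m) 0 then true else false) L.
Definition Ps m (L : list cstr) := filter (fun k => if Rlt_dec 0 (fst k m) then true else false) L.
Definition Ns m (L : list cstr) := filter (fun k => if Rlt_dec (fst k m) 0 then true else false) L.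
Definition comb m (p q : cstr) : cstr :=
  ((fun i => (- fst q m) * fst p i + fst p m * fst q i), (- fst q m) * snd p + fst p m * snd q).
Definition elim m L := Zs m L ++ flat_map (fun p => map (fun q => comb m p q) (Ns m L)) (Ps m L).

Lemma in_Zs m L k : In k (Zs m L) <-> In k L /\ fst k m = 0.
Proof. unfold Zs. rewrite filter_In. destruct (Req_EM_T (fst k m) 0); intuition congruence. Qed.
Lemma in_Ps m L k : In k (Ps m L) <-> In k L /\ 0 < fst k m.
Proof. unfold Ps. rewrite filter_In. destruct (Rlt_dec 0 (fst k m)); intuition congruence. Qed.
Lemma in_Ns m L k : In k (Ns m L) <-> In k L /\ fst k m < 0.
Proof. unfold Ns. rewrite filter_In. destruct (Rlt_dec (fst k m) 0); intuition congruence. Qed.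

Lemma in_elim m L k : In k (elim m L) ->
  (In k L /\ fst k m = 0) \/ exists p q, In p L /\ 0 < fst p m /\ In q L /\ fst q m < 0 /\ k = comb m p q.
Proof. unfold elim. intros H. apply in_app_or in H. destruct H as [H|H].
  - left; apply in_Zs; auto.
  - right. apply in_flat_map in H. destruct H as [p [Hp Hk]]. apply in_map_iff in Hk.
    destruct Hk as [q [<- Hq]]. apply in_Ps in Hp; apply in_Ns in Hq.
    exists p, q; intuition. Qed.

Lemma elim_der m L k : In k (elim m L) -> Der L (fst k) (snd k).
Proof. intros H. apply in_elim in H. destruct H as [[H _]|[p [q [Hp [Pp [Hq [Nq ->]]]]]]].
  - destruct k; apply D_in; auto.
  - destruct p as [ap cp], q as [aq cq]. simpl in *.
    apply (D_add L _ _ _ _ (D_scal L (- aq m) ap cp ltac:(lra) (D_in L _ _ Hp))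
                           (D_scal L (ap m) aq cq ltac:(lra) (D_in L _ _ Hq))). Qed.

Lemma elim_zero m L k : In k (elim m L) -> fst k m = 0.
Proof. intros H. apply in_elim in H. destruct H as [[_ H]|[p [q [_ [_ [_ [_ ->]]]]]]]; auto.
  simpl. ring. Qed.

Lemma elim_feasible m L : feasible m (elim m L) -> feasible (S m) L.
Proof. intros [u Hu].
  set (s := fun a => evalc m a u).
  set (lows := map (fun q => (snd q - s (fst q)) / fst q m) (Ns m L)).
  set (ups := map (fun p => (snd p - s (fst p)) / fst p m) (Ps m L)).
  destruct (between lows ups) as [t [Hl Hv]].
  { intros l v Hl Hv. unfold lows, ups in *. apply in_map_iff in Hl, Hv.
    destruct Hl as [q [<- Hq]]; destruct Hv as [p [<- Hp]].
    apply in_Ps in Hp; apply in_Ns in Hq.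
    assert (Hc : In (comb m p q) (elim m L)).
    { unfold elim. apply in_or_app; right. apply in_flat_map. exists p; split.
      apply in_Ps; tauto. apply in_map. apply in_Ns; tauto. }
    specialize (Hu _ Hc). unfold comb in Hu; simpl in Hu. rewrite evalc_lin in Hu.
    fold (s (fst p)) in Hu. fold (s (fst q)) in Hu.
    destruct Hp as [_ Hp]; destruct Hq as [_ Hq].
    apply Rmult_le_reg_r with (fst p m * - fst q m). nra.
    unfold Rdiv. replace ((snd q - s (fst q)) * / fst q m * (fst p m * - fst q m))
      with (- (snd q - s (fst q)) * fst p m) by (field; lra).
    replace ((snd p - s (fst p)) * / fst p m * (fst p m * - fst q m))
      with ((snd p - s (fst p)) * - fst q m) by (field; lra). nra. }
  exists (fun i => if Nat.eqb i m then t else u i).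
  intros k Hk. rewrite evalc_S. rewrite Nat.eqb_refl.
  rewrite (evalc_ext m _ _ u). 2:{ intros i Hi. destruct (Nat.eqb_spec i m); [lia|auto]. }
  fold (s (fst k)).
  destruct (Rtotal_order (fst k m) 0) as [Hn|[Hz|Hp]].
  - assert (Ht : (snd k - s (fst k)) / fst k m <= t).
    { apply Hl. unfold lows. apply in_map_iff. exists k; split; [reflexivity|]. apply in_Ns; auto. }
    apply Rmult_le_compat_neg_l with (r := fst k m) in Ht; [|lra].
    unfold Rdiv in Ht. replace (fst k m * ((snd k - s (fst k)) * / fst k m)) with (snd k - s (fst k)) in Ht by (field; lra).
    lra.
  - assert (evalc m (fst k) u <= snd k). { apply Hu. unfold elim. apply in_or_app; left. apply in_Zs; auto. }
    rewrite Hz. unfold s. lra.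
  - assert (Ht : t <= (snd k - s (fst k)) / fst k m).
    { apply Hv. unfold ups. apply in_map_iff. exists k; split; [reflexivity|]. apply in_Ps; auto. }
    apply Rmult_le_compat_l with (r := fst k m) in Ht; [|lra].
    unfold Rdiv in Ht. replace (fst k m * ((snd k - s (fst k)) * / fst k m)) with (snd k - s (fst k)) in Ht by (field; lra).
    lra. Qed.

Theorem FM m : forall L, ~ feasible m L -> exists a, (forall i, (i < m)%nat -> a i = 0) /\ Der L a (-1).
Proof. induction m as [|m IH]; intros L HL.
  - destruct (classic (exists k, In k L /\ snd k < 0)) as [[k [Hk Hneg]]|Hno].
    + exists (fun i => / (- snd k) * fst k i). split; [intros; lia|].
      replace (-1) with (/ (- snd k) * snd k) by (field; lra).
      apply D_scal. left. apply Rinv_0_lt_compat; lra. destruct k; apply D_in; auto.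
    + exfalso. apply HL. exists (fun _ => 0). intros k Hk. rewrite evalc_0.
      apply Rnot_lt_le. intros H. apply Hno. exists k; auto.
  - assert (HL' : ~ feasible m (elim m L)) by (intros H; apply HL, elim_feasible; auto).
    destruct (IH _ HL') as [a [Ha Hd]]. exists a. split.
    + intros i Hi. destruct (Nat.eq_dec i m) as [->|Hne].
      * apply (Der_zero _ m _ _ Hd). apply elim_zero.
      * apply Ha; lia.
    + apply (Der_lift _ _ _ _ Hd). apply elim_der. Qed.

Lemma lsum_map {T U} (f : T -> U) l g : lsum (map f l) g = lsum l (fun a => g (f a)).
Proof. induction l; [reflexivity|]. cbn [map]. rewrite !lsum_cons, IHl; auto. Qed.

Section Rep.
Variables (n : nat) (A : list expo) (b : expo).

Definition Qc (a : nat -> R) (c : R) : Prop :=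
  exists (ws : list (R * expo)) kap, 0 <= kap /\
    (forall pr, In pr ws -> 0 <= fst pr /\ In (snd pr) A) /\
    (forall i, (i < n)%nat -> a i = lsum ws (fun pr => fst pr * (coordR (snd pr) i - coordR b i)) - kap * coordR b i) /\
    - kap <= c.

Definition Lc : list cstr :=
  map (fun p => ((fun i => coordR p i - coordR b i), 0)) A ++ [((fun i => - coordR b i), -1)].

Lemma Der_Qc a c : Der Lc a c -> Qc a c.
Proof. induction 1.
  - unfold Lc in H. apply in_app_or in H. destruct H as [H|[H|[]]].
    + apply in_map_iff in H. destruct H as [p [Hp Hin]]. injection Hp as <- <-.
      exists [(1, p)], 0. split; [lra|]. split.
      { intros pr [<-|[]]; simpl; split; auto; lra. }
      split; [|lra]. intros i Hi. rewrite lsum_cons, lsum_nil. simpl. ring.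
    + injection H as <- <-. exists [], 1. split; [lra|]. split; [intros _ []|].
      split; [|lra]. intros i Hi. rewrite lsum_nil; ring.
  - destruct IHDer1 as [w1 [k1 [H1 [H2 [H3 H4]]]]].
    destruct IHDer2 as [w2 [k2 [G1 [G2 [G3 G4]]]]].
    exists (w1 ++ w2), (k1 + k2). split; [lra|]. split.
    { intros pr Hpr; apply in_app_or in Hpr; destruct Hpr; auto. }
    split; [|lra]. intros i Hi. rewrite lsum_app, H3, G3 by auto. ring.
  - destruct IHDer as [w1 [k1 [H1 [H2 [H3 H4]]]]].
    exists (map (fun pr => (k * fst pr, snd pr)) w1), (k * k1). split; [nra|]. split.
    { intros pr Hpr. apply in_map_iff in Hpr. destruct Hpr as [q [<- Hq]]. simpl.
      destruct (H2 q Hq); split; auto. nra. }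
    split; [|nra]. intros i Hi. rewrite lsum_map, H3 by auto. simpl.
    rewrite Rmult_minus_distr_l, <- lsum_scal. f_equal; [|ring]. apply lsum_ext; intros; ring.
  - exists [], 0. split; [lra|]. split; [intros _ []|]. split; [|lra]. intros. rewrite lsum_nil; ring. Qed.

Lemma nondeg_rep : ~ in_face_avoiding_0 n A b ->
  exists ws : list (R * expo),
    (forall pr, In pr ws -> 0 <= fst pr /\ In (snd pr) A) /\ lsum ws fst < 1 /\
    forall i, (i < n)%nat -> lsum ws (fun pr => fst pr * coordR (snd pr) i) = coordR b i.
Proof. intros Hnf.
  assert (Hnfe : ~ feasible n Lc).
  { intros [u Hu]. apply Hnf. exists u.
    assert (Hb : In ((fun i => - coordR b i), -1) Lc).
    { unfold Lc. apply in_or_app; right; left; auto. }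
    specialize (Hu _ Hb) as Hub. simpl in Hub. unfold evalc in Hub.
    assert (Eb : lsum (seq 0 n) (fun i => - coordR b i * u i) = - dotR n u b).
    { unfold dotR. replace (- lsum (seq 0 n) (fun i => u i * coordR b i)) with
        (-1 * lsum (seq 0 n) (fun i => u i * coordR b i)) by ring. rewrite <- lsum_scal.
      apply lsum_ext; intros; ring. }
    split.
    - intros p Hp. assert (Hk : In ((fun i => coordR p i - coordR b i), 0) Lc).
      { unfold Lc. apply in_or_app; left. apply in_map_iff. exists p; auto. }
      specialize (Hu _ Hk). simpl in Hu. unfold evalc in Hu.
      assert (E : lsum (seq 0 n) (fun i => (coordR p i - coordR b i) * u i) = dotR n u p - dotR n u b).
      { unfold dotR. rewrite <- lsum_minus. apply lsum_ext; intros; ring. }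
      lra.
    - lra. }
  destruct (FM n Lc Hnfe) as [a [Ha Hd]].
  destruct (Der_Qc _ _ Hd) as [ws [kap [Hk [Hws [Hc Hm]]]]].
  assert (HS : 0 <= lsum ws fst) by (apply lsum_nonneg; intros; apply Hws; auto).
  set (D := lsum ws fst + kap).
  assert (HD : 0 < D) by (unfold D; lra).
  exists (map (fun pr => (fst pr / D, snd pr)) ws). split; [|split].
  - intros pr Hpr. apply in_map_iff in Hpr. destruct Hpr as [q [<- Hq]]. simpl.
    destruct (Hws q Hq). split; auto. unfold Rdiv. apply Rmult_le_pos; auto. left; apply Rinv_0_lt_compat; auto.
  - rewrite lsum_map. simpl. unfold Rdiv. rewrite lsum_scalr.
    apply Rmult_lt_reg_r with D; auto. rewrite Rmult_assoc, Rinv_l by lra. unfold D; lra.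
  - intros i Hi. specialize (Hc i Hi). rewrite Ha in Hc by auto.
    rewrite lsum_map. simpl.
    assert (E : lsum ws (fun pr => fst pr * (coordR (snd pr) i - coordR b i)) =
                lsum ws (fun pr => fst pr * coordR (snd pr) i) - lsum ws fst * coordR b i).
    { rewrite <- lsum_scalr, <- lsum_minus. apply lsum_ext; intros; ring. }
    rewrite E in Hc.
    transitivity (/ D * lsum ws (fun pr => fst pr * coordR (snd pr) i)).
    + rewrite <- lsum_scal. apply lsum_ext; intros; unfold Rdiv; ring.
    + assert (lsum ws (fun pr => fst pr * coordR (snd pr) i) = D * coordR b i) by (unfold D; lra).
      rewrite H. field. lra.
Qed.
End Rep.

Lemma exp_le_mono a b : a <= b -> exp a <= exp b.
Proof. intros [H|H]; [left; apply exp_increasing; auto|subst; lra]. Qed.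
Lemma ln_le_mono a b : 0 < a -> a <= b -> ln a <= ln b.
Proof. intros Ha [H|H]; [left; apply ln_increasing; auto|subst; lra]. Qed.

Definition zz (x : nat -> R) i := ln (Rabs (x i)).
Definition ldot n (p : expo) (z : nat -> R) := lsum (seq 0 n) (fun i => coordR p i * z i).

Lemma prod_abs_exp (l : list nat) (p : expo) x :
  (forall i, In i l -> (0 < nth i p 0%nat)%nat -> x i <> 0) ->
  Rabs (fold_right Rmult 1 (map (fun i => x i ^ nth i p 0%nat) l)) =
  exp (lsum l (fun i => coordR p i * zz x i)).
Proof. induction l as [|j l IH]; intros H.
  - rewrite lsum_nil, exp_0. simpl. apply Rabs_R1.
  - cbn [map fold_right]. rewrite lsum_cons, exp_plus, Rabs_mult, IH.
    2:{ intros; apply H; auto; right; auto. }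
    f_equal. rewrite <- RPow_abs. unfold coordR, zz.
    destruct (nth j p 0%nat) as [|k] eqn:E.
    + simpl. rewrite Rmult_0_l, exp_0; auto.
    + assert (Hx : x j <> 0) by (apply H; [left; auto|lia]).
      rewrite <- E. rewrite <- Rpower_pow by (apply Rabs_pos_lt; auto).
      unfold Rpower; auto. Qed.

Lemma prod_zero (l : list nat) (p : expo) x i :
  In i l -> (0 < nth i p 0%nat)%nat -> x i = 0 ->
  fold_right Rmult 1 (map (fun i => x i ^ nth i p 0%nat) l) = 0.
Proof. induction l as [|j l IH]; intros Hi Hp Hx; [contradiction|].
  cbn [map fold_right]. destruct Hi as [->|Hi].
  - rewrite Hx. rewrite pow_i by lia. ring.
  - rewrite IH; auto; ring. Qed.

Lemma even_pow_nonneg (y : R) k : Nat.Even k -> 0 <= y ^ k.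
Proof. intros [j ->]. rewrite pow_mult. apply pow_le. apply pow2_ge_0. Qed.

Lemma prod_nonneg (l : list nat) (p : expo) x :
  (forall i, Nat.Even (nth i p 0%nat)) -> 0 <= fold_right Rmult 1 (map (fun i => x i ^ nth i p 0%nat) l).
Proof. intros H. induction l; simpl; [lra|]. apply Rmult_le_pos; auto. apply even_pow_nonneg; auto. Qed.

Lemma mono_nonneg n p x : even_expo p -> 0 <= monomial n p x.
Proof. intros H. apply prod_nonneg; auto. Qed.

Lemma mono_zero n x : monomial n (zero_expo n) x = 1.
Proof. unfold monomial, zero_expo. induction (seq 0 n); simpl; auto.
  rewrite IHl. rewrite nth_repeat. simpl. ring. Qed.

Lemma prod_single n i y : (i < n)%nat ->
  fold_right Rmult 1 (map (fun j => if Nat.eqb j i then y else 1) (seq 0 n)) = y.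
Proof. induction n; intros Hi; [lia|]. rewrite seq_S, map_app, fold_right_app. simpl.
  destruct (Nat.eqb_spec n i).
  - subst. assert (E : forall l, (forall j, In j l -> j <> i) ->
        fold_right Rmult y (map (fun j => if Nat.eqb j i then y else 1) l) = y).
    { induction l; intros Hl; simpl; auto. destruct (Nat.eqb_spec a i).
      exfalso; apply (Hl a); auto; left; auto. rewrite IHl; [ring|]. intros; apply Hl; right; auto. }
    rewrite Rmult_1_r. apply E. intros j Hj; apply in_seq in Hj; lia.
  - rewrite Rmult_1_r. apply IHn. lia. Qed.

Lemma fold_mult_init l y : fold_right Rmult y l = fold_right Rmult 1 l * y.
Proof. induction l; simpl; [ring|]. rewrite IHl; ring. Qed.

Lemma nth_su n i m j : (j < n)%nat ->
  nth j (scaled_unit n i m) 0%nat = if Nat.eqb j i then m else 0%nat.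
Proof. intros Hj. unfold scaled_unit.
  rewrite (nth_indep _ 0%nat ((fun j0 => if Nat.eqb j0 i then m else 0%nat) n))
    by (rewrite length_map, length_seq; lia).
  rewrite (map_nth (fun j0 => if Nat.eqb j0 i then m else 0%nat) (seq 0 n) n j), seq_nth by lia. reflexivity. Qed.

Lemma mono_su n i m x : (i < n)%nat -> monomial n (scaled_unit n i m) x = x i ^ m.
Proof. intros Hi. unfold monomial.
  rewrite <- (prod_single n i (x i ^ m)) by auto. f_equal.
  apply map_ext_in. intros j Hj. apply in_seq in Hj.
  rewrite nth_su by lia. destruct (Nat.eqb_spec j i); subst; simpl; auto. Qed.

Lemma jensen {T} (l : list T) (lm y : T -> R) :
  (forall a, In a l -> 0 <= lm a) -> lsum l lm = 1 ->
  exp (lsum l (fun a => lm a * y a)) <= lsum l (fun a => lm a * exp (y a)).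
Proof. intros Hl H1. set (m := lsum l (fun a => lm a * y a)).
  apply Rle_trans with (lsum l (fun a => lm a * (exp m * (1 + (y a - m))))).
  - right. transitivity (exp m * lsum l (fun a => lm a + lm a * y a - m * lm a)).
    + rewrite lsum_minus, lsum_plus, lsum_scal, H1. fold m. ring.
    + rewrite <- lsum_scal. apply lsum_ext; intros; ring.
  - apply lsum_le. intros a Ha. apply Rmult_le_compat_l; auto.
    replace (exp (y a)) with (exp m * exp (y a - m)) by (rewrite <- exp_plus; f_equal; ring).
    apply Rmult_le_compat_l; [left; apply exp_pos|]. apply exp_ineq1_le. Qed.

Section Rep.
Variables (n : nat) (ws : list (R * expo)) (q : expo).
Hypothesis Hw : forall pr, In pr ws -> 0 <= fst pr.
Hypothesis Hrep : forall i, (i < n)%nat -> lsum ws (fun pr => fst pr * coordR (snd pr) i) = coordR q i.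

Lemma rep_supp pr i : In pr ws -> 0 < fst pr -> (i < n)%nat -> (0 < nth i (snd pr) 0)%nat -> (0 < nth i q 0)%nat.
Proof. intros Hin Hp Hi Hpi. apply INR_lt. simpl. fold (coordR q i). rewrite <- Hrep by auto.
  apply Rlt_le_trans with (fst pr * coordR (snd pr) i).
  - apply Rmult_lt_0_compat; auto. apply lt_0_INR; auto.
  - apply (lsum_elem_le ws (fun pr => fst pr * coordR (snd pr) i)); auto.
    intros b Hb. apply Rmult_le_pos; auto. apply pos_INR. Qed.

Lemma ldot_rep z : ldot n q z = lsum ws (fun pr => fst pr * ldot n (snd pr) z).
Proof. unfold ldot.
  transitivity (lsum (seq 0 n) (fun i => lsum ws (fun pr => fst pr * coordR (snd pr) i * z i))).
  - apply lsum_ext. intros i Hi. apply in_seq in Hi. rewrite <- Hrep by lia.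
    rewrite <- lsum_scalr. auto.
  - rewrite lsum_exchange. apply lsum_ext. intros; rewrite <- lsum_scal. apply lsum_ext; intros; ring. Qed.
End Rep.

Lemma mono_abs n p x : (forall i, (i < n)%nat -> (0 < nth i p 0)%nat -> x i <> 0) ->
  Rabs (monomial n p x) = exp (ldot n p (zz x)).
Proof. intros H. unfold monomial, ldot. apply prod_abs_exp. intros i Hi; apply in_seq in Hi. apply H; lia. Qed.

Lemma mono_zero_case n p x i : (i < n)%nat -> (0 < nth i p 0)%nat -> x i = 0 -> monomial n p x = 0.
Proof. intros. unfold monomial. apply (prod_zero _ _ _ i); auto. apply in_seq; lia. Qed.

Lemma rep_jensen n ws q x :
  (forall pr, In pr ws -> 0 <= fst pr) -> lsum ws fst = 1 ->
  (forall i, (i < n)%nat -> lsum ws (fun pr => fst pr * coordR (snd pr) i) = coordR q i) ->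
  Rabs (monomial n q x) <= lsum ws (fun pr => fst pr * Rabs (monomial n (snd pr) x)).
Proof. intros Hw H1 Hrep.
  assert (Hnn : 0 <= lsum ws (fun pr => fst pr * Rabs (monomial n (snd pr) x))).
  { apply lsum_nonneg. intros; apply Rmult_le_pos; auto; apply Rabs_pos. }
  destruct (classic (exists i, (i < n)%nat /\ (0 < nth i q 0)%nat /\ x i = 0)) as [[i [Hi [Hq Hx]]]|Hno].
  - rewrite (mono_zero_case n q x i) by auto. rewrite Rabs_R0; auto.
  - assert (Hs : forall i, (i < n)%nat -> (0 < nth i q 0)%nat -> x i <> 0).
    { intros i Hi Hq Hx. apply Hno. exists i; auto. }
    rewrite mono_abs by auto. rewrite (ldot_rep n ws q Hrep).
    eapply Rle_trans. apply jensen; auto.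
    apply lsum_le. intros pr Hpr. destruct (Hw pr Hpr) as [Hp|Hp].
    + rewrite mono_abs; [lra|]. intros i Hi Hpi Hx. apply (Hs i); auto.
      apply (rep_supp n ws q Hw Hrep pr); auto.
    + rewrite <- Hp. lra. Qed.

Lemma rep_sub n ws q x Tt :
  (forall pr, In pr ws -> 0 <= fst pr) ->
  (forall i, (i < n)%nat -> lsum ws (fun pr => fst pr * coordR (snd pr) i) = coordR q i) ->
  (forall pr, In pr ws -> Rabs (monomial n (snd pr) x) <= Tt) -> 1 <= Tt ->
  Rabs (monomial n q x) <= exp (lsum ws fst * ln Tt).
Proof. intros Hw Hrep HT H1.
  destruct (classic (exists i, (i < n)%nat /\ (0 < nth i q 0)%nat /\ x i = 0)) as [[i [Hi [Hq Hx]]]|Hno].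
  - rewrite (mono_zero_case n q x i) by auto. rewrite Rabs_R0; left; apply exp_pos.
  - assert (Hs : forall i, (i < n)%nat -> (0 < nth i q 0)%nat -> x i <> 0).
    { intros i Hi Hq Hx. apply Hno. exists i; auto. }
    rewrite mono_abs by auto. rewrite (ldot_rep n ws q Hrep).
    apply exp_le_mono. rewrite <- lsum_scalr. apply lsum_le. intros pr Hpr.
    destruct (Hw pr Hpr) as [Hp|Hp].
    + apply Rmult_le_compat_l; [lra|].
      rewrite <- (ln_exp (ldot n (snd pr) (zz x))). apply ln_le_mono; [apply exp_pos|].
      rewrite <- mono_abs; auto. intros i Hi Hpi Hx. apply (Hs i); auto.
      apply (rep_supp n ws q Hw Hrep pr); auto.
    + rewrite <- Hp. lra. Qed.

Lemma eps_bound sg eps : sg < 1 -> 0 < eps -> exists C, 0 <= C /\ forall Tt, 1 <= Tt -> exp (sg * ln Tt) <= eps * Tt + C.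
Proof. intros Hs He. set (K := - ln eps / (1 - sg)).
  exists (exp (Rabs K)). split; [left; apply exp_pos|]. intros Tt HT.
  assert (HL : 0 <= ln Tt) by (rewrite <- ln_1; apply ln_le_mono; lra).
  set (L := ln Tt) in *.
  assert (ET : Tt = exp L) by (unfold L; rewrite exp_ln; lra).
  destruct (Rle_lt_dec (- ln eps) ((1 - sg) * L)) as [Hc|Hc].
  - assert (E1 : / eps <= exp ((1 - sg) * L)).
    { rewrite <- (exp_ln eps) at 1 by auto. rewrite <- exp_Ropp. apply exp_le_mono; auto. }
    assert (E2 : eps * Tt = eps * exp ((1 - sg) * L) * exp (sg * L)).
    { rewrite ET, Rmult_assoc, <- exp_plus. f_equal. f_equal. ring. }
    assert (1 <= eps * exp ((1 - sg) * L)).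
    { apply Rmult_le_reg_l with (/ eps). apply Rinv_0_lt_compat; auto.
      rewrite <- Rmult_assoc, Rinv_l by lra. lra. }
    assert (0 < exp (sg * L)) by apply exp_pos.
    assert (0 < exp (Rabs K)) by apply exp_pos. nra.
  - assert (sg * L <= Rabs K).
    { apply Rle_trans with L. nra. apply Rle_trans with K; [|apply Rle_abs].
      unfold K. apply Rmult_le_reg_r with (1 - sg); [lra|]. unfold Rdiv.
      rewrite Rmult_assoc, Rinv_l by lra. lra. }
    assert (0 < eps * Tt) by (apply Rmult_lt_0_compat; lra).
    apply exp_le_mono in H. lra. Qed.

Lemma lsum_split {T} (f : T -> bool) l g :
  lsum l g = lsum (filter f l) g + lsum (filter (fun a => negb (f a)) l) g.
Proof. rewrite !lsum_filter, <- lsum_plus. apply lsum_ext; intros; destruct (f a); simpl; ring. Qed.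

Lemma nodup_const {T} (l : list T) z : NoDup l -> (forall a, In a l -> a = z) -> l = [] \/ l = [z].
Proof. intros Hn H. destruct l as [|a [|b l']]; auto.
  - right. rewrite (H a); auto. left; auto.
  - exfalso. inversion Hn; subst. apply H2. rewrite (H a), (H b); [left; auto| |]; simpl; auto. Qed.

Lemma lsum_const {T} (l : list T) k : lsum l (fun _ => k) = INR (length l) * k.
Proof. induction l; [rewrite lsum_nil; simpl; ring|]. rewrite lsum_cons, IHl. cbn [length]. rewrite S_INR. ring. Qed.

Lemma finite_bound {T} (l : list T) (P : T -> R -> Prop) :
  (forall a C C', In a l -> C <= C' -> P a C -> P a C') ->
  (forall a, In a l -> exists C, P a C) -> exists C, forall a, In a l -> P a C.
Proof. intros Hm. induction l as [|a l IH]; intros H.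
  - exists 0; intros _ [].
  - destruct (H a) as [Ca Ha]; [left; auto|].
    destruct IH as [C HC]. { intros; eapply Hm; eauto; right; auto. } { intros; apply H; right; auto. }
    exists (Rmax Ca C). intros b [<-|Hb].
    + eapply Hm; [left; auto| apply Rmax_l | auto].
    + eapply Hm; [right; auto| apply Rmax_r | auto]. Qed.

Lemma finite_pos_lb {T} (l : list T) (d : T -> R) :
  (forall a, In a l -> 0 < d a) -> exists dl, 0 < dl /\ forall a, In a l -> dl <= d a.
Proof. induction l as [|a l IH]; intros H.
  - exists 1; split; [lra|intros _ []].
  - destruct IH as [dl [Hd Hdl]]. intros; apply H; right; auto.
    exists (Rmin (d a) dl). split. apply Rmin_pos; auto. apply H; left; auto.
    intros b [<-|Hb]; [apply Rmin_l|]. eapply Rle_trans; [apply Rmin_r|auto]. Qed.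

Lemma pow2k_bound (y : R) k : (1 <= k)%nat -> y ^ 2 - 1 <= y ^ (2 * k).
Proof. intros Hk. rewrite pow_mult.
  destruct (Rle_lt_dec 1 (y ^ 2)).
  - apply Rle_trans with (y ^ 2); [lra|]. rewrite <- (pow_1 (y^2)) at 1. apply Rle_pow; auto.
  - assert (0 <= (y ^ 2) ^ k) by (apply pow_le, pow2_ge_0). lra. Qed.

Lemma coord_zero n i : coordR (zero_expo n) i = 0.
Proof. unfold coordR, zero_expo. destruct (Nat.lt_ge_cases i n).
  - rewrite nth_repeat. reflexivity.
  - rewrite nth_overflow by (rewrite repeat_length; lia). reflexivity. Qed.

Lemma dot_zero n w : dotR n w (zero_expo n) = 0.
Proof. unfold dotR. rewrite <- (lsum_zero (seq 0 n)). apply lsum_ext; intros; rewrite coord_zero; ring. Qed.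

Section Main.
Variables (n : nat) (A : list expo) (c : expo -> R) (lam : expo -> expo -> R).
Hypothesis HP : poly_support n A c.
Hypothesis HC1 : cond_C1 n A.
Hypothesis HC3 : cond_C3 n A.
Hypothesis HB : min_bary_coords n A lam.

Definition inVb a := if excluded_middle_informative (in_V n A a) then true else false.
Definition Vl := filter inVb A.
Definition Sx x := lsum Vl (fun v => monomial n v x).
Definition isz (a : expo) := if list_eq_dec Nat.eq_dec a (zero_expo n) then true else false.

Lemma in_Vl v : In v Vl <-> In v A /\ in_V n A v.
Proof. unfold Vl, inVb. rewrite filter_In. destruct (excluded_middle_informative (in_V n A v)); intuition congruence. Qed.

Lemma inV_inA v : in_V n A v -> In v A.
Proof. intros [[[H|H] _] Hz]; auto. congruence. Qed.

Lemma Vl_nodup : NoDup Vl.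
Proof. apply NoDup_filter. apply HP. Qed.

Lemma mono_V v x : in_V n A v -> 0 <= monomial n v x.
Proof. intros H. apply mono_nonneg. apply HC1; auto. Qed.

Lemma Sx_nonneg x : 0 <= Sx x.
Proof. apply lsum_nonneg. intros v Hv. apply in_Vl in Hv. apply mono_V; tauto. Qed.

Lemma lam_nonneg p v : in_V0c n A p -> in_V n A v -> 0 <= lam p v.
Proof. intros Hp Hv. destruct (HB p Hp) as [H _]. apply H. apply Hv. Qed.

Lemma bary_bound p x : in_V0c n A p ->
  Rabs (monomial n p x) <= 1 + lsum Vl (fun v => lam p v * monomial n v x).
Proof. intros Hp. destruct (HB p Hp) as [Hlam [W [HWn [HWv [_ [HWp [_ [Hco Hs]]]]]]]].
  set (ws := map (fun w => (lam p w, w)) W).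
  assert (Hj : Rabs (monomial n p x) <= lsum W (fun w => lam p w * Rabs (monomial n w x))).
  { apply Rle_trans with (lsum ws (fun pr => fst pr * Rabs (monomial n (snd pr) x))).
    2:{ right. unfold ws. rewrite lsum_map. reflexivity. }
    apply rep_jensen.
    - intros pr Hpr. apply in_map_iff in Hpr. destruct Hpr as [w [<- Hw]]. simpl. left; auto.
    - unfold ws. rewrite lsum_map. simpl; auto.
    - intros i Hi. unfold ws. rewrite lsum_map. simpl. auto. }
  eapply Rle_trans; [apply Hj|].
  rewrite (lsum_split isz W).
  apply Rplus_le_compat.
  - assert (HN : NoDup (filter isz W)) by (apply NoDup_filter; auto).
    destruct (nodup_const _ (zero_expo n) HN) as [E|E].
    { intros a Ha. apply filter_In in Ha. unfold isz in Ha. destruct (list_eq_dec Nat.eq_dec a (zero_expo n)); auto. destruct Ha; discriminate. }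
    + rewrite E, lsum_nil; lra.
    + rewrite E, lsum_cons, lsum_nil. rewrite mono_zero, Rabs_R1.
      assert (Hz : In (zero_expo n) W). { assert (In (zero_expo n) (filter isz W)) by (rewrite E; left; auto). apply filter_In in H; tauto. }
      destruct (Hlam (zero_expo n) (HWv _ Hz)). lra.
  - eapply Rle_trans.
    + apply (lsum_incl_le _ Vl).
      * apply NoDup_filter; auto.
      * intros w Hw. apply filter_In in Hw. destruct Hw as [Hw Hnz]. unfold isz in Hnz.
        destruct (list_eq_dec Nat.eq_dec w (zero_expo n)) as [|Hne]; [discriminate|].
        assert (in_V n A w) by (split; auto). apply in_Vl. split; auto. apply inV_inA; auto.
      * intros v Hv. apply in_Vl in Hv. apply Rmult_le_pos; [apply lam_nonneg; tauto|apply Rabs_pos].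
    + right. apply lsum_ext. intros v Hv. apply in_Vl in Hv. rewrite Rabs_pos_eq; auto. apply mono_V; tauto. Qed.

Lemma T_bound p x : In p A -> Rabs (monomial n p x) <= 1 + Sx x.
Proof. intros Hp. assert (HS := Sx_nonneg x).
  destruct (classic (in_V n A p)) as [Hv|Hnv].
  - rewrite Rabs_pos_eq by (apply mono_V; auto). unfold Sx.
    assert (monomial n p x <= lsum Vl (fun v => monomial n v x)).
    { apply (lsum_elem_le Vl (fun v => monomial n v x)). apply in_Vl; auto.
      intros b Hb; apply in_Vl in Hb; apply mono_V; tauto. }
    lra.
  - destruct (list_eq_dec Nat.eq_dec p (zero_expo n)) as [->|Hne].
    + rewrite mono_zero, Rabs_R1. lra.
    + assert (Hc : in_V0c n A p). { split; auto. intros H0. apply Hnv. split; auto. }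
      eapply Rle_trans; [apply bary_bound; auto|]. apply Rplus_le_compat_l. unfold Sx.
      apply lsum_le. intros v Hv. apply in_Vl in Hv.
      destruct (HB p Hc) as [Hl _]. destruct (Hl v (proj1 (proj2 Hv))).
      assert (0 <= monomial n v x) by (apply mono_V; tauto). nra. Qed.

Lemma rest_bound b eps : In b A -> ~ in_V n A b -> ~ gem_degenerate n A b -> 0 < eps ->
  exists C, 0 <= C /\ forall x, Rabs (monomial n b x) <= eps * (1 + Sx x) + C.
Proof. intros Hb Hnv Hng He.
  assert (Hnf : ~ in_face_avoiding_0 n A b) by (intros Hf; apply Hng; repeat split; auto).
  destruct (nondeg_rep n A b Hnf) as [ws [Hws [Hsg Hrep]]].
  destruct (eps_bound (lsum ws fst) eps Hsg He) as [C [HC HCb]].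
  exists C. split; auto. intros x.
  assert (HS := Sx_nonneg x).
  eapply Rle_trans; [|apply HCb; lra].
  apply rep_sub; auto.
  - intros pr Hpr; apply Hws; auto.
  - intros pr Hpr. apply T_bound. apply Hws; auto.
  - lra. Qed.

Definition kap a := if excluded_middle_informative (even_expo a) then - Rmin 0 (c a) else Rabs (c a).

Lemma kap_nonneg a : 0 <= kap a.
Proof. unfold kap. destruct (excluded_middle_informative _). assert (Rmin 0 (c a) <= 0) by apply Rmin_l. lra. apply Rabs_pos. Qed.

Lemma gem_V0c b : gem_degenerate n A b -> in_V0c n A b.
Proof. intros [Hb [Hnv [w [_ Hw]]]]. split; auto. intros H0. apply Hnv. split; auto.
  intros ->. rewrite dot_zero in Hw. lra. Qed.

Lemma gem_bound b x : gem_degenerate n A b ->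
  c b * monomial n b x >= - kap b * (1 + lsum Vl (fun v => lam b v * monomial n v x)).
Proof. intros Hg. assert (Hbb := bary_bound b x (gem_V0c b Hg)).
  set (B := 1 + lsum Vl (fun v => lam b v * monomial n v x)) in *.
  unfold kap. destruct (excluded_middle_informative (even_expo b)) as [He|Ho].
  - assert (Hm : 0 <= monomial n b x) by (apply mono_nonneg; auto).
    rewrite Rabs_pos_eq in Hbb by auto.
    assert (Rmin 0 (c b) <= 0) by apply Rmin_l. assert (Rmin 0 (c b) <= c b) by apply Rmin_r.
    nra.
  - assert (Rabs (c b * monomial n b x) <= Rabs (c b) * B).
    { rewrite Rabs_mult. apply Rmult_le_compat_l; auto. apply Rabs_pos. }
    assert (- Rabs (c b * monomial n b x) <= c b * monomial n b x).
    { apply Ropp_le_cancel. rewrite Ropp_involutive. rewrite <- Rabs_Ropp. apply Rle_abs. }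
    lra. Qed.
End Main.

Section Fin.
Variables (n : nat) (A : list expo) (c : expo -> R) (lam : expo -> expo -> R).
Hypothesis HP : poly_support n A c.
Hypothesis HC1 : cond_C1 n A.
Hypothesis HC3 : cond_C3 n A.
Hypothesis HB : min_bary_coords n A lam.
Hypothesis Hyp : forall a, in_V n A a ->
     c a >
       lsum_if (fun b => gem_degenerate n A b /\ ~ even_expo b) A
               (fun b => Rabs (c b) * lam b a)
     - lsum_if (fun b => gem_degenerate n A b /\ even_expo b) A
               (fun b => Rmin 0 (c b) * lam b a).

Notation emi := excluded_middle_informative.
Definition coef v := lsum A (fun a => if emi (gem_degenerate n A a) then kap c a * lam a v else 0).

Lemma coef_eq v :
  lsum_if (fun b => gem_degenerate n A b /\ ~ even_expo b) A (fun b => Rabs (c b) * lam b v)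
  - lsum_if (fun b => gem_degenerate n A b /\ even_expo b) A (fun b => Rmin 0 (c b) * lam b v) = coef v.
Proof. unfold lsum_if, coef. rewrite <- lsum_minus. apply lsum_ext. intros a _. unfold kap.
  destruct (emi (gem_degenerate n A a /\ ~ even_expo a)); destruct (emi (gem_degenerate n A a /\ even_expo a));
  destruct (emi (gem_degenerate n A a)); destruct (emi (even_expo a)); try tauto; ring. Qed.

Lemma main_lower : exists d K, 0 < d /\ forall x, d * Sx n A x - K <= peval n A c x.
Proof.
  destruct (finite_pos_lb (Vl n A) (fun v => c v - coef v)) as [dl [Hdl Hd]].
  { intros v Hv. apply in_Vl in Hv. specialize (Hyp v (proj2 Hv)). rewrite coef_eq in Hyp. lra. }
  set (rest := fun a => ~ in_V n A a /\ ~ gem_degenerate n A a).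
  set (eta := lsum A (fun a => if emi (rest a) then Rabs (c a) else 0)).
  assert (Heta : 0 <= eta). { apply lsum_nonneg; intros; destruct (emi _); [apply Rabs_pos|lra]. }
  set (eps := dl / (2 * (eta + 1))).
  assert (Heps : 0 < eps) by (unfold eps; apply Rdiv_lt_0_compat; lra).
  assert (Hee : eta * eps <= dl / 2).
  { unfold eps. apply Rmult_le_reg_r with (2 * (eta + 1)); [lra|].
    unfold Rdiv. field_simplify; [|lra]. nra. }
  destruct (finite_bound A (fun a C => rest a -> 0 <= C /\ forall x, Rabs (monomial n a x) <= eps * (1 + Sx n A x) + C)) as [C HC].
  { intros a C1 C2 _ Hle H Hr. destruct (H Hr) as [H1 H2]. split; [lra|]. intros x; specialize (H2 x); lra. }
  { intros a Ha. destruct (classic (rest a)) as [Hr|Hr].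
    - destruct (rest_bound n A lam HC1 HB a eps Ha (proj1 Hr) (proj2 Hr) Heps) as [C0 HC0].
      exists C0; auto.
    - exists 0. intros; contradiction. }
  set (K1 := lsum A (fun a => if emi (gem_degenerate n A a) then kap c a else 0)).
  exists (dl / 2), (dl / 2 + K1 + eta * C). split; [lra|]. intros x.
  assert (HS := Sx_nonneg n A HC1 x).
  set (S := Sx n A x) in *.
  set (tV := fun a => if emi (in_V n A a) then c a * monomial n a x else 0).
  set (tG := fun a => if emi (gem_degenerate n A a) then kap c a * (1 + lsum (Vl n A) (fun v => lam a v * monomial n v x)) else 0).
  set (tR := fun a => if emi (rest a) then Rabs (c a) * (eps * (1 + S) + C) else 0).
  assert (Hterm : forall a, In a A -> tV a - tG a - tR a <= c a * monomial n a x).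
  { intros a Ha. unfold tV, tG, tR.
    destruct (emi (in_V n A a)) as [Hv|Hv].
    - destruct (emi (gem_degenerate n A a)) as [Hg|Hg]; [destruct Hg as [_ [Hg _]]; contradiction|].
      destruct (emi (rest a)) as [Hr|Hr]; [destruct Hr; contradiction|]. lra.
    - destruct (emi (gem_degenerate n A a)) as [Hg|Hg].
      + destruct (emi (rest a)) as [Hr|Hr]; [destruct Hr; contradiction|].
        pose proof (gem_bound n A c lam HC1 HB a x Hg). lra.
      + destruct (emi (rest a)) as [Hr|Hr]; [|exfalso; apply Hr; split; auto].
        destruct (HC a Ha Hr) as [_ Hb]. specialize (Hb x).
        assert (Rabs (c a * monomial n a x) <= Rabs (c a) * (eps * (1 + S) + C)).
        { rewrite Rabs_mult. apply Rmult_le_compat_l; [apply Rabs_pos|auto]. }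
        assert (- Rabs (c a * monomial n a x) <= c a * monomial n a x).
        { apply Ropp_le_cancel. rewrite Ropp_involutive. rewrite <- Rabs_Ropp. apply Rle_abs. }
        lra. }
  assert (Hsum : lsum A tV - lsum A tG - lsum A tR <= peval n A c x).
  { unfold peval. rewrite <- !lsum_minus. apply lsum_le. auto. }
  assert (E1 : lsum A tV = lsum (Vl n A) (fun v => c v * monomial n v x)).
  { unfold Vl. rewrite lsum_filter. apply lsum_ext. intros a _. unfold tV, inVb. destruct (emi _); auto. }
  assert (E2 : lsum A tG = K1 + lsum (Vl n A) (fun v => coef v * monomial n v x)).
  { transitivity (lsum A (fun a => (if emi (gem_degenerate n A a) then kap c a else 0) +
       lsum (Vl n A) (fun v => (if emi (gem_degenerate n A a) then kap c a * lam a v else 0) * monomial n v x))).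
    - apply lsum_ext. intros a _. unfold tG. destruct (emi _).
      + rewrite Rmult_plus_distr_l, Rmult_1_r. f_equal. rewrite <- lsum_scal. apply lsum_ext; intros; ring.
      + rewrite <- (lsum_zero (Vl n A)) at 1. rewrite Rplus_0_l. apply lsum_ext; intros; ring.
    - rewrite lsum_plus. fold K1. f_equal. rewrite lsum_exchange. apply lsum_ext. intros v _.
      unfold coef. rewrite lsum_scalr. auto. }
  assert (E3 : lsum A tR = eta * (eps * (1 + S) + C)).
  { unfold eta. rewrite <- lsum_scalr. apply lsum_ext. intros a _. unfold tR. destruct (emi _); ring. }
  assert (E4 : dl * S <= lsum (Vl n A) (fun v => c v * monomial n v x) - lsum (Vl n A) (fun v => coef v * monomial n v x)).
  { rewrite <- lsum_minus. unfold S, Sx. rewrite <- lsum_scal. apply lsum_le. intros v Hv.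
    specialize (Hd v Hv). apply in_Vl in Hv. assert (0 <= monomial n v x) by (apply (mono_V n A HC1); tauto). nra. }
  assert (eta * eps * (1 + S) <= dl / 2 * (1 + S)) by (apply Rmult_le_compat_r; lra).
  rewrite E1, E2, E3 in Hsum. nra.
Qed.
End Fin.

Lemma S_growth n A (HC1 : cond_C1 n A) (HC3 : cond_C3 n A) x :
  lsum (seq 0 n) (fun i => x i ^ 2) - INR n <= INR n * Sx n A x.
Proof.
  replace (INR n * Sx n A x) with (lsum (seq 0 n) (fun _ => Sx n A x))
    by (rewrite lsum_const, length_seq; auto).
  replace (INR n) with (lsum (seq 0 n) (fun _ => 1)) at 1 by (rewrite lsum_const, length_seq; ring).
  rewrite <- lsum_minus. apply lsum_le. intros i Hi. apply in_seq in Hi.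
  destruct (HC3 i ltac:(lia)) as [k [Hk Hv]].
  apply Rle_trans with (monomial n (scaled_unit n i (2 * k)) x).
  - rewrite mono_su by lia. apply pow2k_bound; auto.
  - unfold Sx. apply (lsum_elem_le (Vl n A) (fun v => monomial n v x)).
    + apply in_Vl. split; auto. apply (inV_inA n A); auto.
    + intros b Hb. apply in_Vl in Hb. apply (mono_V n A HC1); tauto. Qed.

Theorem main_thm (n : nat) (A : list expo) (c : expo -> R)
  (lam : expo -> expo -> R) :
  poly_support n A c ->
  cond_C1 n A -> cond_C2 n A c -> cond_C3 n A ->
  min_bary_coords n A lam ->
  (forall a, in_V n A a ->
     c a >
       lsum_if (fun b => gem_degenerate n A b /\ ~ even_expo b) A
               (fun b => Rabs (c b) * lam b a)
     - lsum_if (fun b => gem_degenerate n A b /\ even_expo b) A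
               (fun b => Rmin 0 (c b) * lam b a)) ->
  coercive n A c.
Proof. intros HP HC1 HC2 HC3 HB Hyp M.
  destruct (main_lower n A c lam) as [d [K [Hd Hl]]]; auto.
  destruct n as [|n'].
  - exists 0. intros x Hx. unfold norm2 in Hx. replace (lsum (seq 0 0) (fun i => x i ^ 2)) with 0 in Hx by reflexivity. rewrite sqrt_0 in Hx. lra.
  - set (Nn := INR (S n')). assert (HN : 0 < Nn) by (apply lt_0_INR; lia).
    set (Q := 2 * (Rabs M + Rabs K) / d).
    exists (Rabs (Nn * Q) + Nn + 1). intros x Hx.
    assert (H1 := Rle_abs (Nn * Q)). assert (H2 := Rabs_pos (Nn * Q)).
    set (N2 := lsum (seq 0 (S n')) (fun i => x i ^ 2)).
    assert (HN2 : 0 <= N2) by (apply lsum_nonneg; intros; apply pow2_ge_0).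
    unfold norm2 in Hx. fold N2 in Hx.
    assert (E : N2 = sqrt N2 * sqrt N2) by (rewrite sqrt_sqrt; auto).
    set (r := Rabs (Nn * Q) + Nn + 1) in *.
    assert (Hr1 : 1 <= r) by (unfold r; lra).
    assert (Hrr : r * r < sqrt N2 * sqrt N2) by (apply Rmult_le_0_lt_compat; lra).
    assert (Hr : r <= N2) by nra.
    assert (HG := S_growth (S n') A HC1 HC3 x). fold N2 Nn in HG.
    assert (HS : Q < Sx (S n') A x).
    { apply Rmult_lt_reg_l with Nn; auto. unfold r in Hr. lra. }
    specialize (Hl x).
    assert (d * Q = 2 * (Rabs M + Rabs K)) by (unfold Q; field; lra).
    assert (d * Q < d * Sx (S n') A x) by (apply Rmult_lt_compat_l; auto).
    assert (M <= Rabs M) by apply Rle_abs. assert (- K <= Rabs K) by (rewrite <- Rabs_Ropp; apply Rle_abs).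
    assert (0 <= Rabs M) by apply Rabs_pos. assert (K <= Rabs K) by apply Rle_abs. lra. Qed.

Theorem mainTheorem1 (n : nat) (A : list expo) (c : expo -> R)
  (lam : expo -> expo -> R) :
  poly_support n A c ->
  cond_C1 n A -> cond_C2 n A c -> cond_C3 n A ->
  min_bary_coords n A lam ->
  (forall a, in_V n A a ->
     c a >
       lsum_if (fun b => gem_degenerate n A b /\ ~ even_expo b) A
               (fun b => Rabs (c b) * lam b a)
     - lsum_if (fun b => gem_degenerate n A b /\ even_expo b) A
               (fun b => Rmin 0 (c b) * lam b a)) ->
  coercive n A c.
Proof. exact (main_thm n A c lam). Qed.
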